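(* Let $m\ge 14$ and $T\subseteq[m]$. Suppose that $T$ contains a nonconsecutive subset of size $3$ and $[m]\setminus T$ contains a nonconsecutive subset of size $3$. Then there exist $3$ elements of $T$ and $3$ elements of $[m]\setminus T$ such that the set of these $6$ elements is nonconsecutive.
   Context: A set of integers is nonconsecutive if no two distinct elements differ by exactly $1$. *)

(* Defs.v *)
From mathcomp Require Import all_boot.
Set Implicit Arguments. Unset Strict Implicit. Unset Printing Implicit Defensive.

Definition in_range (m x : nat) : bool := (1 <= x <= m).

Definition nonconsecutive (s : seq nat) : Prop :=
  forall x y, x \in s -> y \in s -> x != y -> y != x.+1.

Definition subset_of_size (A : pred nat) (k : nat) (s : seq nat) : Prop :=
  uniq s /\ size s = k /\ all A s.

(* Main.v *)
Require Import Defs.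
From mathcomp Require Import all_boot zify.
Definition stepv (p c : seq bool) (b : bool) : seq bool :=
  [seq (nth false c (4*i+j)) || (if b then (0<i) && nth false p (4*i.-1+j) else (0<j) && nth false p (4*i+j.-1)) | i <- iota 0 4, j <- iota 0 4].
Definition vinit : seq bool := [seq (i==0)&&(j==0) | i <- iota 0 4, j <- iota 0 4].
Definition st := (nat * seq bool * seq bool)%type.
Definition step (s : st) (b : bool) : st := let: (k,p,c) := s in (if k < 14 then k.+1 else 14, c, stepv p c b).
Fixpoint clos (fuel : nat) (R : seq st) := match fuel with 0 => R | f.+1 => clos f (undup (R ++ [seq step s b | s <- R, b <- [:: true; false]])) end.
Definition R := Eval vm_compute in clos 22 [:: (0, vinit, vinit)].
Lemma Rclosed : all (fun s => all (fun b => step s b \in R) [:: true; false]) R.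
Proof. by vm_compute. Qed.
Lemma Rgood : all (fun s : st => (s.1.1 == 14) ==> nth false s.2 12 ==> nth false s.2 3 ==> nth false s.2 15) R.
Proof. by vm_compute. Qed.

Definition init (i j : nat) := (i==0)&&(j==0).
Fixpoint selp (T : pred nat) n : (nat->nat->bool)*(nat->nat->bool) :=
  match n with
  | 0 => (init, init)
  | n'.+1 => let pc := selp T n' in
     (pc.2, fun i j => pc.2 i j || (if T n then (0<i) && pc.1 i.-1 j else (0<j) && pc.1 i j.-1))
  end.
Definition sel T n := (selp T n).2.
Lemma selp1 T n : (selp T n).1 = sel T n.-1.
Proof. by case: n. Qed.
Lemma sel_rec T n i j : sel T n.+1 i j = sel T n i j ||
  (if T n.+1 then (0<i) && sel T n.-1 i.-1 j else (0<j) && sel T n.-1 i j.-1).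
Proof. by rewrite /sel /= selp1. Qed.

Lemma nonconsec_sub s1 s2 : {subset s1 <= s2} -> nonconsecutive s2 -> nonconsecutive s1.
Proof. by move=> H N x y /H hx /H hy; apply: N. Qed.

Lemma nonconsec_cons y s : nonconsecutive s -> (forall x, x \in s -> x.+1 < y) ->
  nonconsecutive (y :: s).
Proof.
move=> N B x z; rewrite !inE => hx hz xz.
case/orP: hx => [/eqP ex|hx]; case/orP: hz => [/eqP ez|hz].
- by rewrite ex ez; lia.
- by have := B _ hz; rewrite ex; lia.
- by have := B _ hx; rewrite ez; lia.
- exact: N.
Qed.

Definition good T n i j (a b : seq nat) :=
  all (fun x => T x && (0<x<=n)) a /\ all (fun x => ~~T x && (0<x<=n)) b /\
      uniq a /\ uniq b /\ size a = i /\ size b = j /\ nonconsecutive (a++b).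

Lemma all_widen (P : pred nat) n k s : n <= k ->
  all (fun x => P x && (0 < x <= n)) s -> all (fun x => P x && (0 < x <= k)) s.
Proof.
move=> nk /allP H; apply/allP => x /H /andP[-> /andP[h1 h2]] /=.
by rewrite h1 (leq_trans h2 nk).
Qed.

Lemma good_widen T n k i j a b : n <= k -> good T n i j a b -> good T k i j a b.
Proof. by move=> nk [ha [hb [ua [ub [sa [sb N]]]]]]; do !split=> //; apply: all_widen ha || apply: all_widen hb. Qed.

Lemma sel_sound T : forall n i j, sel T n i j -> exists a b, good T n i j a b.
Proof.
suff H : forall n k, k <= n -> forall i j, sel T k i j -> exists a b, good T k i j a b.
  by move=> n; exact: (H n n (leqnn n)).
elim=> [|n IH] k.
  rewrite leqn0 => /eqP -> i j; rewrite /sel /= /init => /andP[/eqP-> /eqP->].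
  by exists [::], [::]; do !split.
rewrite leq_eqVlt => /orP[/eqP->|]; last by apply: IH.
move=> i j; rewrite sel_rec => /orP[/(IH n (leqnn n))|].
  by case=> a [b G]; exists a, b; apply: good_widen G.
have Hn1 : n.-1 <= n by lia.
case hT: (T n.+1) => /andP[i0 /(IH _ Hn1)] [a [b [ha [hb [ua [ub [sa [sb N]]]]]]]].
- exists (n.+1 :: a), b; do !split.
  + by rewrite /= hT /= ltnSn; apply: all_widen ha; lia.
  + by apply: all_widen hb; lia.
  + rewrite /= ua andbT; apply/negP => /(allP ha) /andP[_] /andP[]; lia.
  + done.
  + by rewrite /= sa; lia.
  + done.
  + apply: nonconsec_cons N _ => x; rewrite mem_cat => /orP[/(allP ha)|/(allP hb)] /andP[_] /andP[]; lia.
- exists a, (n.+1 :: b); do !split.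
  + by apply: all_widen ha; lia.
  + by rewrite /= hT /= ltnSn; apply: all_widen hb; lia.
  + done.
  + rewrite /= ub andbT; apply/negP => /(allP hb) /andP[_] /andP[]; lia.
  + done.
  + by rewrite /= sb; lia.
  + apply: (@nonconsec_sub _ (n.+1 :: (a ++ b))).
      by move=> x; rewrite !(mem_cat, inE) => /or3P[]->; rewrite ?orbT.
    apply: nonconsec_cons N _ => x; rewrite mem_cat => /orP[/(allP ha)|/(allP hb)] /andP[_] /andP[]; lia.
Qed.
Lemma sel_complete T : forall n i j a b, good T n i j a b -> sel T n i j.
Proof.
suff H : forall n k, k <= n -> forall i j a b, good T k i j a b -> sel T k i j.
  by move=> n0; exact: (H n0 n0 (leqnn n0)).
elim=> [|n IH] k.
  rewrite leqn0 => /eqP -> i j a b [ha [hb [_ [_ [sa [sb _]]]]]].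
  have a0 : a = [::].
    by case: a ha {sa} => // x a /andP[/andP[_ /andP[h1 h2]] _]; exfalso; lia.
  have b0 : b = [::].
    by case: b hb {sb} => // x b /andP[/andP[_ /andP[h1 h2]] _]; exfalso; lia.
  by rewrite -sa -sb a0 b0.
rewrite leq_eqVlt => /orP[/eqP->|]; last by apply: IH.
move=> i j a b G; have [ha [hb [ua [ub [sa [sb N]]]]]] := G.
have bnd : forall x, x \in a ++ b -> 0 < x <= n.+1.
  by move=> x; rewrite mem_cat => /orP[/(allP ha)|/(allP hb)] /andP[].
case: (boolP (n.+1 \in a ++ b)) => hin.
  have key : forall x, x \in a ++ b -> x != n.+1 -> 0 < x <= n.-1.
    move=> x hx xn; have := bnd x hx; have := N x n.+1 hx hin xn.
    case: (x =P n) => [->|xn']; first by rewrite eqxx.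
    by move=> _; lia.
  have Hn1 : n.-1 <= n by lia.
  case hT: (T n.+1).
  - have hina : n.+1 \in a.
      move: hin; rewrite mem_cat => /orP[//|/(allP hb)]; by rewrite hT.
    rewrite sel_rec hT; apply/orP; right; apply/andP; split.
      by rewrite -sa lt0n size_eq0; apply: contraTneq hina => ->.
    apply: (IH n.-1 Hn1 i.-1 j (rem n.+1 a) b); do !split.
    + apply/allP => x; rewrite (mem_rem_uniq _ ua) inE => /andP[xn hx].
      by rewrite (andP (allP ha x hx)).1 /=; apply: key => //; rewrite mem_cat hx.
    + apply/allP => x hx; rewrite (andP (allP hb x hx)).1 /=; apply: key.
        by rewrite mem_cat hx orbT.
      by apply: contraTneq (andP (allP hb x hx)).1 => ->; rewrite hT.
    + exact: rem_uniq.
    + done.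
    + by rewrite size_rem // sa.
    + done.
    + apply: nonconsec_sub N => x; rewrite !mem_cat => /orP[/mem_rem->//|->].
      by rewrite orbT.
  - have hinb : n.+1 \in b.
      move: hin; rewrite mem_cat => /orP[/(allP ha)|//]; by rewrite hT.
    rewrite sel_rec hT; apply/orP; right; apply/andP; split.
      by rewrite -sb lt0n size_eq0; apply: contraTneq hinb => ->.
    apply: (IH n.-1 Hn1 i j.-1 a (rem n.+1 b)); do !split.
    + apply/allP => x hx; rewrite (andP (allP ha x hx)).1 /=; apply: key.
        by rewrite mem_cat hx.
      by apply: contraTneq (andP (allP ha x hx)).1 => ->; rewrite hT.
    + apply/allP => x; rewrite (mem_rem_uniq _ ub) inE => /andP[xn hx].
      by rewrite (andP (allP hb x hx)).1 /=; apply: key => //; rewrite mem_cat hx orbT.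
    + done.
    + exact: rem_uniq.
    + done.
    + by rewrite size_rem // sb.
    + apply: nonconsec_sub N => x; rewrite !mem_cat => /orP[->//|/mem_rem->].
      by rewrite orbT.
rewrite sel_rec; apply/orP; left; apply: (IH n (leqnn n) i j a b); do !split => //.
- apply/allP => x hx; move/allP: ha => /(_ x hx) /andP[-> /andP[h1 h2]]; rewrite h1 /=.
  have : x != n.+1 by apply: contraNneq hin => <-; rewrite mem_cat hx.
  lia.
- apply/allP => x hx; move/allP: hb => /(_ x hx) /andP[-> /andP[h1 h2]]; rewrite h1 /=.
  have : x != n.+1 by apply: contraNneq hin => <-; rewrite mem_cat hx orbT.
  lia.
Qed.
Definition vec (f : nat -> nat -> bool) := [seq f i j | i <- iota 0 4, j <- iota 0 4].
Definition state T n : st := (minn n 14, vec (selp T n).1, vec (selp T n).2).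
Lemma state_step T n : state T n.+1 = step (state T n) (T n.+1).
Proof.
rewrite /state /step /=; congr (_, _, _).
- case: ltnP => h; lia.
Qed.
Lemma state_in T n : state T n \in R.
Proof.
elim: n => [|n IH]; first by vm_compute.
rewrite state_step; have := allP Rclosed _ IH.
by case: (T n.+1) => /andP[] // _ /andP[].
Qed.
Lemma core T m : 14 <= m -> sel T m 3 0 -> sel T m 0 3 -> sel T m 3 3.
Proof.
move=> hm; have := allP Rgood _ (state_in T m).
rewrite /state /= (minn_idPr hm) eqxx /=.
rewrite /sel => h a b; by move: h; rewrite a b.
Qed.

Theorem proposition4p23 (m : nat) (T : pred nat) :
  14 <= m ->
  (forall x, T x -> in_range m x) ->
  (exists s, subset_of_size T 3 s /\ nonconsecutive s) ->
  (exists s, subset_of_size [pred x | in_range m x && ~~ T x] 3 s /\ nonconsecutive s) ->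
  exists a b,
    subset_of_size T 3 a /\
    subset_of_size [pred x | in_range m x && ~~ T x] 3 b /\
    nonconsecutive (a ++ b).
Proof.
move=> hm hT [s [[us [ss as_]] Ns]] [t [[ut [st as_t]] Nt]].
have h1 : sel T m 3 0.
  apply: (@sel_complete T m 3 0 s [::]); do !split => //.
  - apply/allP => x hx; have := allP as_ x hx => Tx; rewrite Tx /=; exact: hT.
  - by rewrite cats0.
have h2 : sel T m 0 3.
  apply: (@sel_complete T m 0 3 [::] t); do !split => //.
  apply/allP => x hx; have := allP as_t x hx; rewrite /= /in_range.
  by case/andP=> -> ->.
have [a [b [ha [hb [ua [ub [sa [sb N]]]]]]]] := @sel_sound T m 3 3 (@core T m hm h1 h2).
exists a, b; do !split => //.
- by apply/allP => x /(allP ha) /andP[].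
- apply/allP => x /(allP hb) /andP[nT r]; by rewrite /= /in_range r.
Qed.
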